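(* Every set $S\subset\mathbb{Z}_{>1}$ has a unique L-primitive subset $\langle S\rangle\subset S$ with $\mathrm{L}_{\langle S\rangle}=\mathrm{L}_S$. In particular $\langle S\rangle=S$ if $S$ is L-primitive.
   Context: For an integer $a>1$ with largest prime factor $P(a)$, $\mathrm{L}_a=\{ba: b\in\mathbb{N},\ \text{every prime } p\mid b \text{ satisfies } p\ge P(a)\}$, and for a set $T$, $\mathrm{L}_T=\bigcup_{a\in T}\mathrm{L}_a$. A set $A\subset\mathbb{Z}_{>1}$ is L-primitive if $a'\notin\mathrm{L}_a$ for all distinct $a,a'\in A$. *)

(* Defs.v *)
From mathcomp Require Import all_boot.
Set Implicit Arguments. Unset Strict Implicit. Unset Printing Implicit Defensive.

Definition Lset (a n : nat) : Prop :=
  exists b, 0 < b /\ (forall p, prime p -> p %| b -> max_pdiv a <= p) /\ n = b * a.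

Definition LT (T : nat -> Prop) (n : nat) : Prop :=
  exists a, T a /\ Lset a n.

Definition Lprimitive (A : nat -> Prop) : Prop :=
  forall a a', A a -> A a' -> a <> a' -> ~ Lset a a'.

(* Main.v *)
Require Import Defs.
From mathcomp Require Import all_boot.
From Stdlib Require Import Classical.

Lemma pdiv_mono a a' : 0 < a' -> a %| a' -> max_pdiv a <= max_pdiv a'.
Proof.
move=> a'0 da.
case: (leqP a 1) => ha.
  case: a ha da => [|[|]] //= _ _; rewrite /max_pdiv /=; exact: max_pdiv_gt0.
apply: max_pdiv_max.
rewrite mem_primes max_pdiv_prime //= a'0 /=.
exact: dvdn_trans (max_pdiv_dvd a) da.
Qed.

Lemma Lset_trans {a a' a''} : 0 < a -> Lset a a' -> Lset a' a'' -> Lset a a''.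
Proof.
move=> a0 [b [b0 [Hb ->]]] [b' [b'0 [Hb' ->]]].
exists (b' * b); split; first by rewrite muln_gt0 b0 b'0.
split; last by rewrite mulnA.
move=> p pp; rewrite Euclid_dvdM // => /orP [d|d]; last exact: Hb.
apply: leq_trans (Hb' p pp d).
apply: pdiv_mono; first by rewrite muln_gt0 b0 a0.
exact: dvdn_mull.
Qed.

Lemma Lset_le {a a'} : Lset a a' -> a <= a'.
Proof. by move=> [b [b0 [_ ->]]]; rewrite leq_pmull. Qed.

Lemma Lset_refl a : Lset a a.
Proof. exists 1; split => //; split; last by rewrite mul1n.
by move=> p pp; rewrite dvdn1 => /eqP p1; rewrite p1 in pp. Qed.

Definition Min (S : nat -> Prop) a := S a /\ forall a', S a' -> Lset a' a -> a' = a.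

Lemma min_below (S : nat -> Prop) (HS : forall a, S a -> 1 < a) n :
  forall a, a <= n -> S a -> exists c, Min S c /\ Lset c a.
Proof.
elim: n => [|n IH] a ha Sa.
  by have := HS a Sa; rewrite leqn0 in ha; rewrite (eqP ha).
case: (classic (Min S a)) => [m|nm]; first by exists a; split => //; exact: Lset_refl.
have [a' [Sa' [La' ne]]] : exists a', S a' /\ Lset a' a /\ a' <> a.
  apply: NNPP => H; apply: nm; split => // a' Sa' L; apply: NNPP => ne; apply: H.
  by exists a'.
have lt : a' < a by rewrite ltn_neqAle (Lset_le La') andbT; apply/eqP.
have [c [mc Lc]] := IH a' (leq_trans lt ha) Sa'.
exists c; split => //; apply: (Lset_trans _ Lc La').
by have := HS c (proj1 mc); apply: ltnW.
Qed.

Lemma uniq_min (S : nat -> Prop) (HS : forall a, S a -> 1 < a) (T' : nat -> Prop) :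
  (forall a, T' a -> S a) -> Lprimitive T' ->
  (forall n, LT T' n <-> LT S n) -> forall a, T' a <-> Min S a.
Proof.
move=> sub pr eq a; split.
  move=> Ta; split; first exact: sub.
  move=> a' Sa' La'.
  have [c [Tc Lc]] : LT T' a' by apply/eq; exists a'; split => //; exact: Lset_refl.
  have c0 : 0 < c by have := HS c (sub c Tc); apply: ltnW.
  have Lca : Lset c a by apply: (Lset_trans c0 Lc La').
  case: (classic (c = a)) => [E|ne]; last by case: (pr c a Tc Ta ne).
  subst c; apply/eqP; rewrite eqn_leq (Lset_le La') (Lset_le Lc) //.
move=> [Sa Ma].
have [c [Tc Lc]] : LT T' a by apply/eq; exists a; split => //; exact: Lset_refl.
by rewrite -(Ma c (sub c Tc) Lc).
Qed.

Theorem lemma5p4 (S : nat -> Prop) (HS : forall a, S a -> 1 < a) :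
  (exists T : nat -> Prop,
     [/\ (forall a, T a -> S a), Lprimitive T, (forall n, LT T n <-> LT S n)
       & forall T' : nat -> Prop,
           (forall a, T' a -> S a) -> Lprimitive T' ->
           (forall n, LT T' n <-> LT S n) ->
           forall a, T' a <-> T a])
  /\
  (Lprimitive S ->
     forall T : nat -> Prop,
       (forall a, T a -> S a) -> Lprimitive T ->
       (forall n, LT T n <-> LT S n) ->
       forall a, T a <-> S a).
Proof.
split.
  exists (Min S); split.
  - by move=> a [].
  - move=> a a' [Sa _] [Sa' Ma'] ne L; exact: ne (Ma' a Sa L).
  - move=> n; split.
      by move=> [a [[Sa _] L]]; exists a.
    move=> [a [Sa L]].
    have [c [mc Lc]] := min_below S HS a a (leqnn a) Sa.
    exists c; split => //; apply: (Lset_trans _ Lc L).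
    by have := HS c (proj1 mc); apply: ltnW.
  - exact: uniq_min.
move=> pS T sub pT eq a.
rewrite (uniq_min S HS T sub pT eq a).
by rewrite -(uniq_min S HS S (fun a h => h) pS (fun n => conj id id) a).
Qed.
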